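(* Let $n\ge 1$, let $b\in B_n\cong\mathrm{MCG}(D^2\setminus\{p_1,\dots,p_n\},\partial D^2)$, and let $\tau\in\mathrm{MCG}(D^2\setminus\{p_1,\dots,p_n\})$ be an orientation-reversing involution (i.e. $\tau$ reverses orientation and $\tau^2=\mathrm{Id}$). Set $b^*=\tau b\tau$. Then the closure of the braid $bb^*$ is a knot (i.e. has exactly one component) if and only if $n$ is odd and $\pi(b\tau)$ is an $n$-cycle, where $\pi$ denotes the canonical map to the symmetric group $S_n$ recording the induced permutation of the punctures $p_1,\dots,p_n$.
   Context: Braids are viewed as mapping classes of the $n$-punctured disc relative to the boundary; the mapping class group $\mathrm{MCG}(D^2\setminus\{p_1,\dots,p_n\})$ (not relative to the boundary) acts on $B_n$ by conjugation, which is how $b^*=\tau b\tau$ is regarded as a braid. *)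

(* Defs.v *)
From HB Require Import structures.
From mathcomp Require Import all_boot all_order all_algebra all_fingroup.
From mathcomp Require Import all_classical all_reals all_analysis.
Set Implicit Arguments. Unset Strict Implicit. Unset Printing Implicit Defensive.
Import Order.TTheory GRing.Theory Num.Theory.
Import numFieldNormedType.Exports.
Local Open Scope ring_scope.
Local Open Scope classical_set_scope.

Definition in_open_disc {R : realType} (z : R * R) : Prop := z.1 ^+ 2 + z.2 ^+ 2 < 1.
Definition in_closed_disc {R : realType} (z : R * R) : Prop := z.1 ^+ 2 + z.2 ^+ 2 <= 1.
Definition on_circle {R : realType} (z : R * R) : Prop := z.1 ^+ 2 + z.2 ^+ 2 = 1.

Definition geom_braid {R : realType} (n : nat) (p : 'I_n -> R * R)
    (b : 'I_n -> R -> R * R) : Prop :=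
  [/\ forall i, {within `[(0:R), 1], continuous (b i)},
      forall i t, 0 <= t <= 1 -> in_open_disc (b i t),
      forall i j t, 0 <= t <= 1 -> i != j -> b i t <> b j t,
      forall i, b i 0 = p i
    & forall i, exists j, b i 1 = p j].

(* A homeomorphism of D^2 permuting the punctures which is an involution:
   a representative of an involutive element of MCG(D^2 \ {p_1..p_n}). *)
Definition disc_involution {R : realType} (n : nat) (p : 'I_n -> R * R)
    (tau : R * R -> R * R) : Prop :=
  [/\ {within [set z | in_closed_disc z], continuous tau},
      forall z, in_closed_disc z -> in_closed_disc (tau z),
      forall z, on_circle z -> on_circle (tau z),
      forall z, in_closed_disc z -> tau (tau z) = z
    & forall i, exists j, tau (p i) = p j].

(* Twice the signed area of the triangle (a, b, c); its sign is the
   orientation of the triple. *)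
Definition cross {R : realType} (a b c : R * R) : R :=
  (b.1 - a.1) * (c.2 - a.2) - (b.2 - a.2) * (c.1 - a.1).

(* tau reverses orientation: it reverses the cyclic order of any three
   distinct points of the boundary circle. *)
Definition orientation_reversing {R : realType} (tau : R * R -> R * R) : Prop :=
  forall a b c, on_circle a -> on_circle b -> on_circle c ->
    a <> b -> b <> c -> a <> c ->
    cross (tau a) (tau b) (tau c) * cross a b c < 0.

(* Standard embedding of the solid torus D^2 x S^1 (S^1 = [0,1]/{0~1})
   into R^3. *)
Definition torus_emb {R : realType} (z : R * R) (u : R) : R * R * R :=
  ((2 + z.1) * cos (2 * pi * u), (2 + z.1) * sin (2 * pi * u), z.2).

(* The closure (in R^3) of the braid b b^*, where b^* = tau b tau has strands
   t |-> tau (b j t): first run through b (u in [0,1/2]), then b^*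
   (u in [1/2,1]). *)
Definition closure_b_bstar {R : realType} (n : nat) (b : 'I_n -> R -> R * R)
    (tau : R * R -> R * R) : set (R * R * R) :=
  [set q | exists i u, 0 <= u <= 1 / 2 /\ q = torus_emb (b i (2 * u)) u] `|`
  [set q | exists j u, 1 / 2 <= u <= 1 /\ q = torus_emb (tau (b j (2 * u - 1))) u].

(* The closure is a knot: a single component, i.e. a nonempty connected set. *)
Definition is_knot {R : realType} (K : set (R * R * R)) : Prop :=
  K !=set0 /\ connected K.

Definition braid_perm {R : realType} (n : nat) (p : 'I_n -> R * R)
    (b : 'I_n -> R -> R * R) (s : {perm 'I_n}) : Prop :=
  forall i, b i 1 = p (s i).
Definition tau_perm {R : realType} (n : nat) (p : 'I_n -> R * R)
    (tau : R * R -> R * R) (t : {perm 'I_n}) : Prop :=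
  forall i, tau (p i) = p (t i).

Definition is_ncycle (n : nat) (s : {perm 'I_n}) : Prop :=
  exists i, #|porbit s i| = n.

(* Main.v *)
Require Import Defs.
From HB Require Import structures.
From mathcomp Require Import all_boot all_order all_algebra all_fingroup.
From mathcomp Require Import all_classical all_reals all_analysis.
From mathcomp Require Import ring lra zify.
Unset Printing Implicit Defensive.
Import Order.TTheory GRing.Theory Num.Theory.
Import numFieldNormedType.Exports.
Local Open Scope ring_scope.
Local Open Scope classical_set_scope.
Section Geom.
Variable R : realType.

Lemma torus_cvg {T : Type} (F : set_system T) {FF : Filter F}
  (zf : T -> R * R) (uf : T -> R) (z0 : R * R) (u0 : R) :
  zf x @[x --> F] --> z0 -> uf x @[x --> F] --> u0 ->
  torus_emb (zf x) (uf x) @[x --> F] --> torus_emb z0 u0.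
Proof.
move=> zc uc.
have z1 : (zf x).1 @[x --> F] --> z0.1.
  by apply: (cvg_comp zf fst zc); exact: cvg_fst.
have z2 : (zf x).2 @[x --> F] --> z0.2.
  by apply: (cvg_comp zf snd zc); exact: cvg_snd.
have a : (2 * pi * uf x) @[x --> F] --> 2 * pi * u0.
  exact: (cvgM (cvg_cst _) uc).
have ca : cos (2 * pi * uf x) @[x --> F] --> cos (2 * pi * u0).
  exact: (cvg_comp _ cos a (@continuous_cos R _)).
have sa : sin (2 * pi * uf x) @[x --> F] --> sin (2 * pi * u0).
  exact: (cvg_comp _ sin a (@continuous_sin R _)).
have r : (2 + (zf x).1) @[x --> F] --> 2 + z0.1 by exact: (cvgD (cvg_cst _) z1).
rewrite /torus_emb.
apply: (@cvg_pair _ _ _ F (nbhs _) (nbhs _) FF _ _); last exact: z2.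
apply: (@cvg_pair _ _ _ F (nbhs _) (nbhs _) FF _ _).
- exact: (cvgM r ca).
- exact: (cvgM r sa).
Qed.

Lemma torus_emb_1 (z : R * R) : torus_emb z 1 = torus_emb z 0.
Proof.
rewrite /torus_emb !mulr1 !mulr0 cos0 sin0.
have -> : 2 * pi = pi *+ 2 :> R by rewrite mulr_natl.
by rewrite cos2pi sin2pi.
Qed.

Lemma cos_eq1 (x : R) : 0 <= x <= pi *+ 2 -> cos x = 1 -> x = 0 \/ x = pi *+ 2.
Proof.
move=> /andP[x0 x2] cx.
have pi0 := @pi_ge0 R.
have [xpi|xpi] := leP x pi.
  left; apply: (@cos_inj R); rewrite ?cos0 //; rewrite in_itv /= ?x0 ?xpi //.
  by rewrite lexx pi0.
right.
have e : cos (pi *+ 2 - x) = 1.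
  by rewrite addrC cosD2pi cosN.
have : pi *+ 2 - x = 0.
  apply: (@cos_inj R); rewrite ?cos0 //; rewrite in_itv /=.
    apply/andP; split; first by rewrite subr_ge0.
    by rewrite lerBlDr mulr2n lerD2l ltW.
  by rewrite lexx pi0.
by move/eqP; rewrite subr_eq0 => /eqP.
Qed.

Lemma angle_inj (u v : R) : 0 <= u <= 1 -> 0 <= v <= 1 ->
  cos (2 * pi * u) = cos (2 * pi * v) -> sin (2 * pi * u) = sin (2 * pi * v) ->
  u = v \/ (u = 0 /\ v = 1) \/ (u = 1 /\ v = 0).
Proof.
move=> /andP[u0 u1] /andP[v0 v1] cuv suv.
have c1 : cos (2 * pi * `|u - v|) = 1.
  have -> : 2 * pi * `|u - v| = `|2 * pi * (u - v)|.
    by rewrite normrM (ger0_norm (x := 2 * pi)) // mulr_ge0 // pi_ge0.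
  by rewrite cos_norm mulrBr cosB cuv suv -!expr2 cos2Dsin2.
have pi0 := @pi_gt0 R.
have hd : `|u - v| <= 1 by rewrite ler_norml; apply/andP; split; lra.
have hr : 0 <= 2 * pi * `|u - v| <= pi *+ 2.
  apply/andP; split; first by rewrite mulr_ge0 // mulr_ge0 // ltW.
  rewrite -mulr_natl; nra.
have [e|e] := cos_eq1 _ hr c1.
  left; have hn : 0 <= `|u - v| := normr_ge0 _.
  have : `|u - v| = 0 by nra.
  by move/eqP; rewrite normr_eq0 subr_eq0 => /eqP.
right.
have : `|u - v| = 1.
  move: e; rewrite -mulr_natl => e.
  have : pi * (2 * `|u - v| - 2) = 0 by nra.
  move/eqP; rewrite mulf_eq0 (gt_eqF pi0) /= subr_eq0 => /eqP h; lra.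
move/eqP; rewrite eqr_norml => /andP[/orP[] /eqP h _].
  by right; split; lra.
by left; split; lra.
Qed.

Lemma torus_emb_inj (z z' : R * R) (u v : R) :
  in_closed_disc z -> in_closed_disc z' -> 0 <= u <= 1 -> 0 <= v <= 1 ->
  torus_emb z u = torus_emb z' v ->
  z = z' /\ (u = v \/ (u = 0 /\ v = 1) \/ (u = 1 /\ v = 0)).
Proof.
case: z => a c; case: z' => a' c'; rewrite /in_closed_disc /= => hz hz' hu hv.
rewrite /torus_emb /= => -[e1 e2 e3].
have ra : 0 < 2 + a by nra.
have ra' : 0 < 2 + a' by nra.
have sq : (2 + a) ^+ 2 = (2 + a') ^+ 2.
  transitivity (((2 + a) * cos (2 * pi * u)) ^+ 2 + ((2 + a) * sin (2 * pi * u)) ^+ 2).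
    by rewrite !exprMn -mulrDr cos2Dsin2 mulr1.
  by rewrite e1 e2 !exprMn -mulrDr cos2Dsin2 mulr1.
have eaa : a = a'.
  move/eqP: sq; rewrite eqf_sqr => /orP[/eqP|/eqP]; first by move=> h; lra.
  by move=> h; lra.
subst a'.
have rn : 2 + a != 0 by rewrite gt_eqF.
have ec : cos (2 * pi * u) = cos (2 * pi * v) by apply: (mulfI rn).
have es : sin (2 * pi * u) = sin (2 * pi * v) by apply: (mulfI rn).
by split; [rewrite e3|exact: angle_inj].
Qed.

End Geom.
Arguments torus_emb_inj {R z z' u v}.
Lemma within_comp {X Y Z : topologicalType} (A : set X) (B : set Y)
  (f : X -> Y) (g : Y -> Z) :
  (forall x, A x -> B (f x)) -> {within A, continuous f} ->
  {within B, continuous g} -> {within A, continuous (g \o f)}.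
Proof.
move=> fAB /subspace_continuousP cf /subspace_continuousP cg.
apply/subspace_continuousP => x Ax W hW.
have h1 := cg (f x) (fAB _ Ax) W hW.
have h2 := cf x Ax _ h1.
move: h2; rewrite /within /= !nbhs_simpl.
move=> h; rewrite /fmap /= in h *.
apply: (@filterS _ (nbhs x) _ _ _ _ h) => y /= hy Ay.
exact: (hy Ay (fAB _ Ay)).
Qed.


Lemma bigsetU_mem (T : Type) (I : eqType) (r : seq I) (P : pred I)
  (F : I -> set T) x :
  (\big[setU/set0]_(i <- r | P i) F i) x <-> exists i, [/\ i \in r, P i & F i x].
Proof.
elim: r => [|a r IH]; first by rewrite big_nil; split => // -[i []].
rewrite big_cons; case: ifP => Pa; split.
- case=> [Fa|/IH [i [ir Pi Fi]]]; first by exists a; rewrite mem_head.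
  by exists i; rewrite in_cons ir orbT.
- case=> i [+ Pi Fi]; rewrite in_cons => /orP[/eqP ia|ir]; first by left; rewrite -ia.
  by right; apply/IH; exists i.
- by move/IH => [i [ir Pi Fi]]; exists i; rewrite in_cons ir orbT.
- case=> i [+ Pi Fi]; rewrite in_cons => /orP[/eqP ia|ir].
    by move: Pa; rewrite -ia Pi.
  by apply/IH; exists i.
Qed.

Lemma fin_bigcup_compact {T : topologicalType} {I : finType} (P : pred I)
  (F : I -> set T) : (forall i, compact (F i)) ->
  compact (\bigcup_(i in [set i | P i]) F i).
Proof.
move=> cF.
have -> : \bigcup_(i in [set i | P i]) F i = \big[setU/set0]_(i <- enum I | P i) F i.
  apply/seteqP; split => x.
    by case=> i /= Pi Fi; apply/bigsetU_mem; exists i; rewrite mem_enum.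
  by case/bigsetU_mem => i [_ Pi Fi]; exists i.
exact: bigsetU_compact.
Qed.

Section Main.
Variables (R : realType) (n : nat) (p : 'I_n -> R * R) (b : 'I_n -> R -> R * R)
  (tau : R * R -> R * R).
Hypotheses (pinj : injective p) (pdisc : forall i, in_open_disc (p i))
  (gb : geom_braid p b) (di : disc_involution p tau).
Variables (s t : {perm 'I_n}).
Hypotheses (Hs : braid_perm p b s) (Ht : tau_perm p tau t).

Definition I01 : set R := `[(0:R), 1]%classic.
Lemma I01P x : I01 x <-> 0 <= x <= 1.
Proof. by rewrite /I01 /= in_itv. Qed.

Lemma open_closed (z : R * R) : in_open_disc z -> in_closed_disc z.
Proof. by rewrite /in_open_disc /in_closed_disc => /ltW. Qed.

Lemma b_disc i x : I01 x -> in_open_disc (b i x).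
Proof. by case: gb => _ H _ _ _ /I01P; apply: H. Qed.

Lemma b_inj i j x : I01 x -> b i x = b j x -> i = j.
Proof.
case: gb => _ _ H _ _ /I01P hx e; apply/eqP; apply: contraT => ij.
by have := H i j x hx ij.
Qed.

Lemma b0 i : b i 0 = p i.
Proof. by case: gb. Qed.

Lemma b_cont i : {within I01, continuous (b i)}.
Proof. by case: gb. Qed.

Lemma tau_cl z : in_closed_disc z -> in_closed_disc (tau z).
Proof. by case: di => _ H _ _ _; apply: H. Qed.

Lemma tau_inv z : in_closed_disc z -> tau (tau z) = z.
Proof. by case: di => _ _ _ H _; apply: H. Qed.

Lemma tau_cont : {within [set z : R * R | in_closed_disc z], continuous tau}.
Proof. by case: di. Qed.

Lemma t_inv i : t (t i) = i.
Proof.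
apply: pinj; rewrite -!Ht tau_inv //; exact/open_closed.
Qed.

Arguments open_closed {z}.
Arguments tau_cl {z}.
Arguments tau_inv {z}.
Arguments b_disc i {x}.
Arguments b_inj i j {x}.

Definition h : {perm 'I_n} := (s * t)%g.
Lemma hE i : h i = t (s i).
Proof. by rewrite /h permM. Qed.

Definition g1 i (x : R) := torus_emb (b i x) (x / 2).
Definition g2 j (x : R) := torus_emb (tau (b j x)) ((x + 1) / 2).
Definition P1 i := g1 i @` I01.
Definition P2 j := g2 j @` I01.

Lemma K_eq : closure_b_bstar b tau = \bigcup_(i in setT) (P1 i `|` P2 i).
Proof.
rewrite /closure_b_bstar; apply/seteqP; split => q.
- case=> [[i [u [hu ->]]]|[j [u [hu ->]]]].
  + exists i => //; left; exists (2 * u); first by apply/I01P; apply/andP; split; lra.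
    by rewrite /g1; congr torus_emb; field.
  + exists j => //; right; exists (2 * u - 1); first by apply/I01P; apply/andP; split; lra.
    by rewrite /g2; congr torus_emb; field.
- case=> i _ [[x /I01P hx <-]|[x /I01P hx <-]].
  + left; exists i, (x / 2); split; first by apply/andP; split; lra.
    by rewrite /g1; congr torus_emb; congr b; field.
  + right; exists i, ((x + 1) / 2); split; first by apply/andP; split; lra.
    by rewrite /g2; congr torus_emb; congr (tau (b _ _)); field.
Qed.

Lemma g1_cont i : {within I01, continuous (g1 i)}.
Proof.
apply/subspace_continuousP => x Ax.
have hid : y @[y --> within I01 (nbhs x)] --> x := cvg_within I01.
apply: torus_cvg.
- by move/subspace_continuousP: (b_cont i) => /(_ x Ax).
- by apply: cvgM; [exact: hid|exact: cvg_cst].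
Qed.

Lemma g2_cont j : {within I01, continuous (g2 j)}.
Proof.
apply/subspace_continuousP => x Ax.
have hid : y @[y --> within I01 (nbhs x)] --> x := cvg_within I01.
have tb : {within I01, continuous (tau \o b j)}.
  apply: (within_comp _ [set z : R * R | in_closed_disc z]); last exact: tau_cont.
    by move=> y Ay; apply/open_closed/b_disc.
  exact: b_cont.
apply: torus_cvg.
- by move/subspace_continuousP: tb => /(_ x Ax).
- by apply: cvgM; [apply: cvgD; [exact: hid|exact: cvg_cst]|exact: cvg_cst].
Qed.

Lemma I01_conn : connected I01.
Proof. apply/connected_intervalP; exact: interval_is_interval. Qed.

Lemma P1_conn i : connected (P1 i).
Proof. exact: connected_continuous_connected I01_conn (g1_cont i). Qed.
Lemma P2_conn i : connected (P2 i).
Proof. exact: connected_continuous_connected I01_conn (g2_cont i). Qed.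
Lemma P1_compact i : compact (P1 i).
Proof. by apply: continuous_compact; [exact: g1_cont|exact: segment_compact]. Qed.
Lemma P2_compact i : compact (P2 i).
Proof. by apply: continuous_compact; [exact: g2_cont|exact: segment_compact]. Qed.

Lemma g1_1 i : g1 i 1 = g2 (h i) 0.
Proof. by rewrite /g1 /g2 Hs b0 Ht hE t_inv add0r. Qed.

Lemma g2_1 j : g2 j 1 = g1 (h j) 0.
Proof.
rewrite /g1 /g2 Hs Ht b0 -hE mul0r.
have -> : (1 + 1) / 2 = 1 :> R by field.
exact: torus_emb_1.
Qed.

Lemma d11 i i' x y : I01 x -> I01 y -> g1 i x = g1 i' y -> i = i'.
Proof.
move=> hx hy e.
have hz := open_closed (b_disc i hx); have hz' := open_closed (b_disc i' hy).
move/I01P: (hx) => hx'; move/I01P: (hy) => hy'.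
have hu : 0 <= x / 2 <= 1 by apply/andP; split; lra.
have hv : 0 <= y / 2 <= 1 by apply/andP; split; lra.
have [ez [hxy|[[h1 h2]|[h1 h2]]]] := torus_emb_inj hz hz' hu hv e.
- have exy : x = y by lra.
  by subst y; apply: (b_inj _ _ hx).
- by exfalso; clear e ez; lra.
- by exfalso; clear e ez; lra.
Qed.

Lemma d22 j j' x y : I01 x -> I01 y -> g2 j x = g2 j' y -> j = j'.
Proof.
move=> hx hy e.
have hz := tau_cl (open_closed (b_disc j hx)).
have hz' := tau_cl (open_closed (b_disc j' hy)).
move/I01P: (hx) => hx'; move/I01P: (hy) => hy'.
have hu : 0 <= (x + 1) / 2 <= 1 by apply/andP; split; lra.
have hv : 0 <= (y + 1) / 2 <= 1 by apply/andP; split; lra.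
have [ez [hxy|[[h1 h2]|[h1 h2]]]] := torus_emb_inj hz hz' hu hv e.
- have exy : x = y by lra.
  subst y; apply: (b_inj _ _ hx).
  rewrite -(tau_inv (open_closed (b_disc j hx))) ez.
  by rewrite tau_inv //; exact/open_closed/(b_disc _ hx).
- by exfalso; clear e ez; lra.
- by exfalso; clear e ez; lra.
Qed.

Lemma d12 i j x y : I01 x -> I01 y -> g1 i x = g2 j y -> j = h i \/ i = h j.
Proof.
move=> hx hy e.
have hz := open_closed (b_disc i hx).
have hz' := tau_cl (open_closed (b_disc j hy)).
move/I01P: (hx) => hx'; move/I01P: (hy) => hy'.
have hu : 0 <= x / 2 <= 1 by apply/andP; split; lra.
have hv : 0 <= (y + 1) / 2 <= 1 by apply/andP; split; lra.
have [ez [hxy|[[h1 h2]|[h1 h2]]]] := torus_emb_inj hz hz' hu hv e.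
- have ex : x = 1 by lra.
  have ey : y = 0 by lra.
  subst x y; left.
  by rewrite hE; move: ez; rewrite Hs b0 Ht => /pinj ->; rewrite t_inv.
- have ex : x = 0 by lra.
  have ey : y = 1 by lra.
  subst x y; right.
  by move: ez; rewrite Hs b0 Ht => /pinj ->; rewrite hE.
- by exfalso; clear e ez; lra.
Qed.

Lemma I01_0 : I01 0. Proof. by apply/I01P; rewrite lexx ler01. Qed.
Lemma I01_1 : I01 1. Proof. by apply/I01P; rewrite lexx ler01. Qed.

Lemma hS k x : (h ^+ k.+1)%g x = h ((h ^+ k)%g x).
Proof. by rewrite expgSr permM. Qed.

Definition Q i0 m := P1 ((h ^+ (2 * m))%g i0) `|` P2 ((h ^+ (2 * m).+1)%g i0).

Lemma Q_conn i0 m : connected (Q i0 m).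
Proof.
apply: connectedU; last exact: P2_conn; last exact: P1_conn.
exists (g1 ((h ^+ (2 * m))%g i0) 1); split; first by exists 1 => //; exact: I01_1.
by rewrite g1_1 -hS; exists 0 => //; exact: I01_0.
Qed.

Lemma Q_meet i0 m : Q i0 m `&` Q i0 m.+1 !=set0.
Proof.
exists (g2 ((h ^+ (2 * m).+1)%g i0) 1); split; first by right; exists 1 => //; exact: I01_1.
left; rewrite g2_1 -hS; exists 0; first exact: I01_0.
by rewrite mulnS add2n.
Qed.

Definition U i0 m := \bigcup_(k in [set k | (k <= m)%N]) Q i0 k.

Lemma U_conn i0 m : connected (U i0 m).
Proof.
elim: m => [|m IH].
  have -> : U i0 0 = Q i0 0.
    rewrite /U; apply/seteqP; split => q.
      by case=> k /=; rewrite leqn0 => /eqP ->.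
    by move=> hq; exists 0%N.
  exact: Q_conn.
have -> : U i0 m.+1 = U i0 m `|` Q i0 m.+1.
  rewrite /U; apply/seteqP; split => q.
    case=> k /=; rewrite leq_eqVlt ltnS => /orP[/eqP -> hq|hk hq]; first by right.
    by left; exists k.
  case=> [[k /= hk hq]|hq]; first by exists k => //=; rewrite (leq_trans hk).
  by exists m.+1 => //=.
apply: connectedU => //; last exact: Q_conn.
case: (Q_meet i0 m) => q [h1 h2]; exists q; split => //.
by exists m => //=.
Qed.

Lemma conn_dir : odd n -> is_ncycle h ->
  connected (\bigcup_(i in setT) (P1 i `|` P2 i)).
Proof.
move=> hodd [i0 ci0].
have pT : porbit h i0 = [set: 'I_n]%SET.
  by apply/eqP; rewrite eqEcard finset.subsetT cardsT card_ord ci0 leqnn.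
have hn : (h ^+ n)%g i0 = i0.
  by rewrite permX; have := iter_porbit h i0; rewrite ci0.
have hnk k : (h ^+ (n * k))%g i0 = i0.
  elim: k => [|k IH]; first by rewrite muln0 expg0 perm1.
  by rewrite mulnS expgD permM hn.
have hq : n = (n./2).*2.+1 by rewrite -[in LHS](odd_double_half n) hodd.
have rep j : exists m, j = (h ^+ (2 * m))%g i0.
  have : j \in porbit h i0 by rewrite pT inE.
  case/porbitP => k ->; exists (k * (n./2).+1).
  have -> : (2 * (k * (n./2).+1) = n * k + k)%N.
    move: hq; move: (n./2) => q ->; rewrite -muln2; lia.
  by rewrite expgD permM hnk.
have -> : \bigcup_(i in setT) (P1 i `|` P2 i) = \bigcup_(m in setT) U i0 m.
  apply/seteqP; split => q.
    case=> i _ [hq1|hq2].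
      have [m em] := rep i; exists m => //; exists m => //=.
      by left; rewrite -em.
    have [m em] := rep (h^-1 i)%g; exists m => //; exists m => //=.
    by right; rewrite hS -em permKV.
  case=> m _ [k _ [hq1|hq2]]; first by exists ((h ^+ (2 * k))%g i0) => //; left.
  by exists ((h ^+ (2 * k).+1)%g i0) => //; right.
apply: bigcup_connected; last by move=> m _; exact: U_conn.
exists (g1 ((h ^+ (2 * 0))%g i0) 0) => m _.
by exists 0%N => //; left; exists 0 => //; exact: I01_0.
Qed.

Arguments d11 {i i' x y}.
Arguments d22 {j j' x y}.
Arguments d12 {i j x y}.

Lemma disc_dir : (0 < n)%N -> connected (\bigcup_(i in setT) (P1 i `|` P2 i)) ->
  odd n /\ is_ncycle h.
Proof.
move=> n0 hc.
pose i0 : 'I_n := Ordinal n0.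
pose g : {perm 'I_n} := (h ^+ 2)%g.
have gE x : g x = h (h x) by rewrite /g expgS expg1 permM.
pose O := porbit g i0.
have Ocl x : (g x \in O) = (x \in O).
  by rewrite /O -!eq_porbit_mem; have := porbit_perm g 1 x; rewrite expg1 => ->.
have disj i i' q : i \in O -> i' \notin O -> (P1 i `|` P2 (h i)) q ->
    (P1 i' `|` P2 (h i')) q -> False.
  move=> iO i'O [[x hx <-]|[x hx <-]] [[y hy e]|[y hy e]].
  - by move: i'O; rewrite -(d11 hx hy (esym e)) iO.
  - case: (d12 hx hy (esym e)) => [/perm_inj ii|].
      by move: i'O; rewrite ii iO.
    by move=> ii; move: i'O; rewrite -Ocl gE -ii iO.
  - case: (d12 hy hx e) => [/perm_inj ii|].
      by move: i'O; rewrite -ii iO.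
    by move=> ii; move: i'O; rewrite ii -gE Ocl iO.
  - by move: i'O; rewrite -(perm_inj (d22 hx hy (esym e))) iO.
have OT : forall i, i \in O.
  move=> i1; apply: contrapT => i1O.
  suff : ~ connected (\bigcup_(i in setT) (P1 i `|` P2 i)) by [].
  apply/connectedPn.
  pose A := \bigcup_(i in [set i | i \in O]) (P1 i `|` P2 (h i)).
  pose B := \bigcup_(i in [set i | i \notin O]) (P1 i `|` P2 (h i)).
  have cA : closed A.
    apply: compact_closed; first exact: norm_hausdorff.
    apply: fin_bigcup_compact => i; apply: compactU; [exact: P1_compact|exact: P2_compact].
  have cB : closed B.
    apply: compact_closed; first exact: norm_hausdorff.
    apply: fin_bigcup_compact => i; apply: compactU; [exact: P1_compact|exact: P2_compact].
  have AB : A `&` B = set0.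
    apply/seteqP; split => // q [[i /= iO hi] [i' /= i'O hi']].
    exact: (disj i i' q iO i'O hi hi').
  exists (fun bb => if bb then B else A); split.
  - case.
      exists (g1 i1 0); exists i1; first exact/negP.
      by left; exists 0 => //; exact: I01_0.
    exists (g1 i0 0); exists i0; first by rewrite /= /O porbit_id.
    by left; exists 0 => //; exact: I01_0.
  - apply/seteqP; split => q.
      case=> i _ [hq|hq].
        have [iO|iO] := boolP (i \in O); [left|right]; exists i => //; by left.
      have [iO|iO] := boolP ((h^-1)%g i \in O); [left|right]; exists ((h^-1)%g i) => //;
        by right; rewrite permKV.
    by case=> [[i _ [hq|hq]]|[i _ [hq|hq]]]; [exists i|exists (h i)|exists i|exists (h i)];
      rewrite //; [left|right|left|right].
  - split.
      by rewrite -(closure_id A).1.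
    by rewrite -(closure_id B).1.
have pT : porbit h i0 = [set: 'I_n]%SET.
  apply/setP => j; rewrite inE.
  have := OT j; rewrite /O => /porbitP [k ->].
  by rewrite /g -expgnA mem_porbit.
have cn : #|porbit h i0| = n by rewrite pT cardsT card_ord.
split; last by exists i0.
apply: contraT => ev.
have n1 : (1 < n)%N.
  by rewrite ltn_neqAle n0 andbT; apply: contraNneq ev => <-.
have := OT (h i0); rewrite /O => /porbitP [k].
rewrite /g -expgnA permX => ek.
have per m : iter m h i0 = iter (m %% n)%N h i0.
  rewrite {1}(div.divn_eq m n) addnC iterD; congr iter.
  elim: (m %/ n)%N => [|q IH] //; rewrite mulSn iterD IH.
  by have := iter_porbit h i0; rewrite cn.
move: ek; rewrite per.
have hu := uniq_traject_porbit h i0; rewrite cn in hu.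
have sz : size (traject h i0 n) = n by rewrite size_traject.
have r_lt : (2 * k %% n < n)%N by rewrite ltn_mod.
move=> ek; have : iter 1 h i0 = iter (2 * k %% n)%N h i0 by [].
rewrite -(@nth_traject _ h _ _ n1 i0) -(@nth_traject _ h _ _ r_lt i0) => /eqP.
rewrite nth_uniq ?sz // => /eqP e1.
have := div.divn_eq (2 * k) n; rewrite -e1 => e2.
have : odd (2 * k) by rewrite {1}e2 oddD oddM (negbTE ev) andbF.
by rewrite oddM.
Qed.

End Main.

Theorem lemma3p3 (R : realType) (n : nat) (p : 'I_n -> R * R)
    (b : 'I_n -> R -> R * R) (tau : R * R -> R * R) :
  (0 < n)%N ->
  injective p ->
  (forall i, in_open_disc (p i)) ->
  geom_braid p b ->
  disc_involution p tau ->
  orientation_reversing tau ->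
  is_knot (closure_b_bstar b tau) <->
  (odd n /\ exists (s t : {perm 'I_n}),
     [/\ braid_perm p b s, tau_perm p tau t & is_ncycle (s * t)%g]).
Proof.
move=> n0 pinj pdisc gb di _.
have [sf hsf] : exists sf : {perm 'I_n}, braid_perm p b sf.
  pose f i := odflt i [pick j | b i 1 == p j].
  have hf i : b i 1 = p (f i).
    rewrite /f; case: pickP => [j /eqP //|H].
    case: gb => _ _ _ _ /(_ i) [j ej].
    by have := H j; rewrite ej eqxx.
  have finj : injective f.
    move=> i i' e; apply/eqP; apply: contraT => ii.
    case: gb => _ _ H _ _.
    have : b i 1 <> b i' 1 by apply: H => //; rewrite ler01 lexx.
    by rewrite !hf e.
  by exists (perm finj) => i; rewrite permE.
have [tf htf] : exists tf : {perm 'I_n}, tau_perm p tau tf.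
  pose f i := odflt i [pick j | tau (p i) == p j].
  have hf i : tau (p i) = p (f i).
    rewrite /f; case: pickP => [j /eqP //|H].
    case: di => _ _ _ _ /(_ i) [j ej].
    by have := H j; rewrite ej eqxx.
  have finj : injective f.
    move=> i i' e; apply: pinj.
    case: di => _ _ _ H _.
    rewrite -(H (p i)); last exact/open_closed.
    by rewrite -(H (p i')); [rewrite !hf e|exact/open_closed].
  by exists (perm finj) => i; rewrite permE.
have key s t : braid_perm p b s -> tau_perm p tau t ->
    (is_knot (closure_b_bstar b tau) <-> odd n /\ is_ncycle (s * t)%g).
  move=> Hs Ht; rewrite /is_knot K_eq; split.
    case=> _ hc; have := disc_dir _ _ _ _ _ pinj pdisc gb di _ _ Hs Ht n0 hc; exact.
  case=> ho hcyc; split; last exact: (conn_dir _ _ _ _ _ pinj pdisc gb di _ _ Hs Ht ho hcyc).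
  exists (g1 _ _ b (Ordinal n0) 0); exists (Ordinal n0) => //; left.
  by exists 0 => //; exact: I01_0.
split.
  move/(key _ _ hsf htf) => [ho hc]; split => //.
  by exists sf, tf.
case=> ho [s [t [Hs Ht Hc]]].
by apply/(key _ _ Hs Ht).
Qed.
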